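(* Let $m\ge 1$ and $n=2^m$. Consider the algorithm $\textsc{MergeShuffle}$ on an array $T$ of $n$ elements with cut-off $k=m$: $T$ is divided into $2^m$ blocks of size $1$ (each trivially shuffled, with no random bits used), and then for $p=0,1,\dots,m-1$ each pair of adjacent blocks of size $2^p$ is merged into a block of size $2^{p+1}$ by the procedure $\textsc{Merge}$ (defined in the context). Then the expected total number of random bits used is $n\log_2 n+\Theta(n)$ as $n\to\infty$.
   Context: The procedure $\textsc{Merge}(T,s,n_1,n_2)$: set $i\gets s$, $j\gets s+n_1$, $n\gets s+n_1+n_2$. Repeat: draw an independent fair random bit; if it is $0$, then break out of the loop if $i=j$; if it is $1$, then break out of the loop if $j=n$, and otherwise swap $T[i]$ and $T[j]$ and set $j\gets j+1$; in either non-breaking case set $i\gets i+1$. After the loop, while $i<n$: draw an integer $m$ uniformly at random from $\{s,\dots,i\}$ (independently of everything else), swap $T[i]$ and $T[m]$, and set $i\gets i+1$. Cost model: each fair bit drawn costs one random bit, and drawing a uniform integer from a set of $K$ elements costs $\lceil \log_2 K\rceil$ random bits. *)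

(* Defs.v *)
From mathcomp Require Import all_boot all_order all_algebra.
Set Implicit Arguments. Unset Strict Implicit. Unset Printing Implicit Defensive.
Import Order.TTheory GRing.Theory Num.Theory.

(* Cost of drawing a uniform integer from a set of K elements: ceil(log2 K).
   up_log 2 K is the smallest e with K <= 2^e. *)
Definition clog2 (K : nat) : nat := up_log 2 K.

(* The first loop of Merge(T,s,n1,n2), reading fair bits from the stream
   [bits] starting at position [pos] (false = 0, true = 1).
   The fuel n1+n2+1 is always sufficient (each non-breaking step increments i). *)
Fixpoint merge_loop (fuel : nat) (bits : nat -> bool) (pos i j n : nat)
  : nat * nat :=
  match fuel with
  | 0 => (pos, i)
  | fuel'.+1 =>
      if ~~ bits pos then
        (if i == j then (pos.+1, i)
         else merge_loop fuel' bits pos.+1 i.+1 j n)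
      else
        (if j == n then (pos.+1, i)
         else merge_loop fuel' bits pos.+1 i.+1 j.+1 n)
  end.

(* The second loop draws, for each i from the final i to n-1, a uniform
   integer in {s,...,i} (i-s+1 elements), costing clog2 (i-s+1) bits.
   (The array contents and the values of the drawn integers do not
   influence the cost, so they are not modelled.) *)
Definition merge_cost (bits : nat -> bool) (pos s n1 n2 : nat) : nat * nat :=
  let n := s + n1 + n2 in
  let: (pos', i) := merge_loop (n1 + n2).+1 bits pos s (s + n1) n in
  (pos', (pos' - pos) + \sum_(i <= t < n) clog2 (t - s + 1)).

Definition merge_schedule (m : nat) : seq (nat * nat * nat) :=
  [seq (b * 2 ^ p.+1, 2 ^ p, 2 ^ p)
   | p <- iota 0 m, b <- iota 0 (2 ^ (m - p.+1))].

Definition mergeshuffle_cost (m : nat) (bits : nat -> bool) : nat :=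
  (foldl (fun (acc : nat * nat) (x : nat * nat * nat) =>
            let: (pos', c) := merge_cost bits acc.1 x.1.1 x.1.2 x.2 in
            (pos', acc.2 + c))
         (0, 0) (merge_schedule m)).2.

(* An upper bound on the number of fair bits the whole run can consume. *)
Definition stream_len (m : nat) : nat :=
  \sum_(x <- merge_schedule m) (x.1.2 + x.2).+1.

Definition stream_of (L : nat) (f : {ffun 'I_L -> bool}) (k : nat) : bool :=
  if insub k is Some i then f i else false.

(* Expected number of random bits used: average over uniformly random
   fair bit sequences of length stream_len m (later bits are never read). *)
Definition expected_cost (m : nat) : rat :=
  ((\sum_(f : {ffun 'I_(stream_len m) -> bool})
      (mergeshuffle_cost m (stream_of f))%:R) / (2 ^ stream_len m)%:R)%R.

(* Main.v *)
Require Import Defs.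
From mathcomp Require Import all_boot all_order all_algebra.
From mathcomp Require Import zify ring lra.
From Stdlib Require Import FunctionalExtensionality.
Import Order.TTheory GRing.Theory Num.Theory.
Local Open Scope ring_scope.

Definition shift (k : nat) (b : nat -> bool) : nat -> bool := fun t => b (k + t)%N.
Definition cons (x : bool) (s : nat -> bool) : nat -> bool :=
  fun t => if t is t'.+1 then s t' else x.

Fixpoint Avg (L : nat) (phi : (nat -> bool) -> rat) : rat :=
  match L with
  | 0 => phi (fun _ => false)
  | L'.+1 => (Avg L' (fun s => phi (cons false s)) + Avg L' (fun s => phi (cons true s))) / 2
  end.

Definition dep (L : nat) (phi : (nat -> bool) -> rat) :=
  forall s s', (forall t, (t < L)%N -> s t = s' t) -> phi s = phi s'.

Lemma Avg_ext L phi psi : (forall s, phi s = psi s) -> Avg L phi = Avg L psi.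
Proof. by move=> h; rewrite (functional_extensionality _ _ h). Qed.

Lemma Avg_cst L c : Avg L (fun _ => c) = c.
Proof. elim: L c => [//|L IH] c /=; rewrite !IH; by field. Qed.

Lemma Avg_add L phi psi : Avg L (fun s => phi s + psi s) = Avg L phi + Avg L psi.
Proof. elim: L phi psi => [//|L IH] phi psi /=; rewrite !IH; by field. Qed.

Lemma Avg_scale L c phi : Avg L (fun s => c * phi s) = c * Avg L phi.
Proof. elim: L phi => [//|L IH] phi /=; rewrite !IH; by field. Qed.

Lemma Avg_le L phi psi : (forall s, phi s <= psi s) -> Avg L phi <= Avg L psi.
Proof.
elim: L phi psi => [|L IH] phi psi h /=; first exact: h.
rewrite ler_pM2r ?invr_gt0 //; apply: lerD; apply: IH => s; exact: h.
Qed.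

Lemma Avg_constf L phi : (forall s s', phi s = phi s') -> Avg L phi = phi (fun _ => false).
Proof.
move=> h; rewrite -(Avg_cst L (phi (fun _ => false))); apply: Avg_ext => s; exact: h.
Qed.

Lemma Avg_indep k L phi : dep L phi -> Avg (k + L) phi = Avg L phi.
Proof.
elim: L phi => [|L IH] phi hd.
  rewrite addn0 Avg_constf // => s s'; apply: hd => t; by rewrite ltn0.
rewrite addnS /= !IH // => s s' h; apply: hd => -[|t] //= ht; exact: h.
Qed.

Lemma shift_cons x s : shift 1 (cons x s) = s.
Proof. by apply: functional_extensionality => t. Qed.

Lemma shiftD k p b : shift (k + p) b = shift p (shift k b).
Proof. apply: functional_extensionality => t; by rewrite /shift addnA. Qed.

Lemma shift0 b : shift 0 b = b.
Proof. by apply: functional_extensionality => t. Qed.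

Lemma ml_shift fuel b k pos i j n :
  merge_loop fuel b (k + pos) i j n =
  ((k + (merge_loop fuel (shift k b) pos i j n).1)%N, (merge_loop fuel (shift k b) pos i j n).2).
Proof.
elim: fuel pos i j => [|f IH] pos i j //=.
have -> : shift k b pos = b (k + pos)%N by [].
case: (b (k + pos)%N) => /=; [case: (j == n) | case: (i == j)] => //=. all: try rewrite -addnS IH; by rewrite ?addnS.
Qed.

Lemma ml_cons fuel x s pos i j n :
  merge_loop fuel (cons x s) pos.+1 i j n =
  ((merge_loop fuel s pos i j n).1.+1, (merge_loop fuel s pos i j n).2).
Proof. by rewrite -add1n ml_shift shift_cons. Qed.

Lemma ml_dep fuel b b' pos i j n :
  (forall t, (pos <= t < pos + fuel)%N -> b t = b' t) ->
  merge_loop fuel b pos i j n = merge_loop fuel b' pos i j n.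
Proof.
elim: fuel pos i j => [//|f IH] pos i j h /=.
have -> : b pos = b' pos by apply: h; lia.
case: (b' pos) => /=; [case: (j == n) | case: (i == j)] => //=; apply: IH => t /andP[h1 h2];
  apply: h; lia.
Qed.

Lemma ml_le fuel b pos i j n : ((merge_loop fuel b pos i j n).1 <= pos + fuel)%N.
Proof.
elim: fuel pos i j => [|f IH] pos i j /=; first by rewrite addn0.
case: (b pos) => /=; [case: (j == n) | case: (i == j)] => //=;
  try (by rewrite addnS ltnS leq_addr); by rewrite addnS -addSn IH.
Qed.

Lemma shiftS p x s : shift p.+1 (cons x s) = shift p s.
Proof. by rewrite -add1n shiftD shift_cons. Qed.

Lemma SM fuel L (g : nat -> nat -> rat) psi i j n : dep L psi ->
  Avg (fuel + L) (fun b => g (merge_loop fuel b 0 i j n).1 (merge_loop fuel b 0 i j n).2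
                         + psi (shift (merge_loop fuel b 0 i j n).1 b))
  = Avg fuel (fun b => g (merge_loop fuel b 0 i j n).1 (merge_loop fuel b 0 i j n).2) + Avg L psi.
Proof.
move=> hd; elim: fuel g i j => [|f IH] g i j.
  rewrite /= add0n Avg_add Avg_cst; congr (_ + _); apply: Avg_ext => s; by rewrite shift0.
have H : forall x, Avg (f + L) (fun s =>
    g (merge_loop f.+1 (cons x s) 0 i j n).1 (merge_loop f.+1 (cons x s) 0 i j n).2
    + psi (shift (merge_loop f.+1 (cons x s) 0 i j n).1 (cons x s)))
  = Avg f (fun s => g (merge_loop f.+1 (cons x s) 0 i j n).1 (merge_loop f.+1 (cons x s) 0 i j n).2)
    + Avg L psi.
  move=> x /=; case: x => /=; [case: (j == n) | case: (i == j)] => /=.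
  - rewrite Avg_cst (Avg_ext _ _ (fun s => g 1%N i + psi s)); last by move=> s; rewrite shift_cons.
    by rewrite Avg_add Avg_cst Avg_indep.
  - under Avg_ext => s do rewrite ml_cons /= shiftS.
    under [X in _ = X + _]Avg_ext => s do rewrite ml_cons /=.
    exact: (IH (fun p i => g p.+1 i)).
  - rewrite Avg_cst (Avg_ext _ _ (fun s => g 1%N i + psi s)); last by move=> s; rewrite shift_cons.
    by rewrite Avg_add Avg_cst Avg_indep.
  - under Avg_ext => s do rewrite ml_cons /= shiftS.
    under [X in _ = X + _]Avg_ext => s do rewrite ml_cons /=.
    exact: (IH (fun p i => g p.+1 i)).
rewrite addSn /= H H; by field.
Qed.

Set Implicit Arguments. Unset Strict Implicit.

Definition consf L (b : bool) (g : {ffun 'I_L -> bool}) : {ffun 'I_L.+1 -> bool} :=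
  [ffun i => if unlift ord0 i is Some j then g j else b].

Lemma stream_of_cons L b (g : {ffun 'I_L -> bool}) :
  stream_of (consf b g) = cons b (stream_of g).
Proof.
apply: functional_extensionality => -[|k]; rewrite /stream_of /=.
  case: insubP => [i _ Ei | Hn] //.
  have -> : i = ord0 by apply: val_inj.
  by rewrite ffunE unlift_none.
case: insubP => [i Hi Ei | Hn]; case: insubP => [j Hj Ej | Hm] //.
- have -> : i = lift ord0 j by apply: val_inj; rewrite /= Ei -Ej.
  by rewrite ffunE liftK.
- exfalso; move: Hi Hm; lia.
- exfalso; move: Hn Hj; lia.
Qed.

Lemma ffun_avg L phi :
  (\sum_(f : {ffun 'I_L -> bool}) phi (stream_of f)) / (2 ^ L)%:R = Avg L phi.
Proof.
elim: L phi => [|L IH] phi.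
  have E : forall f : {ffun 'I_0 -> bool}, stream_of f = (fun _ => false).
    move=> f; apply: functional_extensionality => k; by rewrite /stream_of insubN.
  under eq_bigr => f _ do rewrite E.
  by rewrite sumr_const card_ffun card_ord /= expn0 mulr1n divr1.
pose h (p : bool * {ffun 'I_L -> bool}) := consf p.1 p.2.
pose h' (f : {ffun 'I_L.+1 -> bool}) := (f ord0, [ffun j => f (lift ord0 j)]).
have hb : {on [pred i | true], bijective h}.
  exists h' => [[b g] _ | f _].
    rewrite /h /h' /consf /= ffunE unlift_none; congr pair.
    by apply/ffunP => j; rewrite !ffunE liftK.
  apply/ffunP => i; rewrite /h /h' /consf /= ffunE.
  by case: unliftP => [j ->|->]; rewrite ?ffunE.
rewrite (reindex h hb) /= -(pair_big predT predT (fun b g => phi (stream_of (h (b, g))))) /=.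
rewrite big_bool /=.
under eq_bigr => g _ do rewrite /h /= stream_of_cons.
under [X in _ + X]eq_bigr => g _ do rewrite /h /= stream_of_cons.
rewrite -!(IH (fun s => phi (cons _ s))) expnS natrM.
have h2 : (2 ^ L)%:R != 0 :> rat by rewrite pnatr_eq0 expn_eq0.
by field.
Qed.

Definition mc (b : nat -> bool) (x : nat * nat * nat) := merge_cost b 0 x.1.1 x.1.2 x.2.

Fixpoint run (sch : seq (nat * nat * nat)) (b : nat -> bool) : nat * nat :=
  match sch with
  | [::] => (0%N, 0%N)
  | x :: r => let pc := mc b x in let rc := run r (shift pc.1 b) in
              ((pc.1 + rc.1)%N, (pc.2 + rc.2)%N)
  end.

Definition fuelx (x : nat * nat * nat) := (x.1.2 + x.2).+1.
Definition Lof (sch : seq (nat * nat * nat)) := (\sum_(x <- sch) fuelx x)%N.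

Definition gx (x : nat * nat * nat) (p i : nat) : nat :=
  (p - 0 + \sum_(i <= t < x.1.1 + x.1.2 + x.2) clog2 (t - x.1.1 + 1))%N.

Definition mlx (b : nat -> bool) (x : nat * nat * nat) :=
  merge_loop (fuelx x) b 0 x.1.1 (x.1.1 + x.1.2) (x.1.1 + x.1.2 + x.2).

Lemma mc_eq b x : mc b x = ((mlx b x).1, gx x (mlx b x).1 (mlx b x).2).
Proof. by rewrite /mc /merge_cost /mlx /gx /fuelx; case: merge_loop. Qed.

Lemma merge_cost_shift b pos s n1 n2 :
  merge_cost b pos s n1 n2 =
  ((pos + (merge_cost (shift pos b) 0 s n1 n2).1)%N, (merge_cost (shift pos b) 0 s n1 n2).2).
Proof.
rewrite /merge_cost -{1}[pos]addn0 ml_shift.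
case: merge_loop => p i /=; by rewrite addKn subn0.
Qed.

Definition stepf (b : nat -> bool) := (fun (acc : nat * nat) (x : nat * nat * nat) =>
            let: (pos', c) := merge_cost b acc.1 x.1.1 x.1.2 x.2 in
            (pos', (acc.2 + c)%N)).

Lemma fold_run b sch pos acc :
  foldl (stepf b) (pos, acc) sch =
  ((pos + (run sch (shift pos b)).1)%N, (acc + (run sch (shift pos b)).2)%N).
Proof.
elim: sch pos acc => [|x r IH] pos acc /=; first by rewrite !addn0.
rewrite /stepf /= merge_cost_shift /=.
rewrite -/(stepf b) IH -shiftD /mc.
by rewrite !addnA.
Qed.

Lemma mscost_run m b : mergeshuffle_cost m b = (run (merge_schedule m) b).2.
Proof.
have -> : mergeshuffle_cost m b = (foldl (stepf b) (0%N, 0%N) (merge_schedule m)).2 by [].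
by rewrite fold_run shift0.
Qed.

Lemma run_dep sch b b' : (forall t, (t < Lof sch)%N -> b t = b' t) -> run sch b = run sch b'.
Proof.
elim: sch b b' => [//|x r IH] b b' h /=.
have E : mc b x = mc b' x.
  rewrite /mc /merge_cost (ml_dep _ _ b') // => t Ht; apply: h.
  rewrite /Lof big_cons /fuelx; lia.
rewrite E (IH _ (shift (mc b' x).1 b')) // => t Ht.
rewrite /shift; apply: h.
have := ml_le (fuelx x) b' 0 x.1.1 (x.1.1 + x.1.2) (x.1.1+x.1.2+x.2).
rewrite -/(mlx b' x) mc_eq /= /Lof big_cons -/(Lof r); lia.
Qed.

Lemma total_avg sch :
  Avg (Lof sch) (fun b => ((run sch b).2)%:R) =
  \sum_(x <- sch) Avg (fuelx x) (fun b => ((mc b x).2)%:R).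
Proof.
elim: sch => [|x r IH]; first by rewrite /Lof !big_nil.
rewrite big_cons -IH /Lof big_cons -/(Lof r).
have hd : dep (Lof r) (fun b => ((run r b).2)%:R).
  by move=> s s' h; rewrite (run_dep h).
transitivity (Avg (fuelx x + Lof r) (fun b => (gx x (mlx b x).1 (mlx b x).2)%:R
     + (fun b => ((run r b).2)%:R) (shift (mlx b x).1 b))).
  by apply: Avg_ext => b; rewrite /= mc_eq /= natrD.
rewrite /mlx (SM _ _ (fun p i => (gx x p i)%:R) _ _ _ _ hd); congr (_ + _).
by apply: Avg_ext => b; rewrite mc_eq.
Qed.

Lemma ml_inv fuel b pos i j n : (i <= j <= n)%N -> (n - i < fuel)%N ->
  (i <= (merge_loop fuel b pos i j n).2 <= n)%N /\
  (merge_loop fuel b pos i j n).1 = (pos + ((merge_loop fuel b pos i j n).2 - i) + 1)%N.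
Proof.
elim: fuel pos i j => [|f IH] pos i j hij hf; first by rewrite ltn0 in hf.
rewrite /=; case: (b pos) => /=; case: ifP => /eqP h /=; try (split; lia).
  have [h1 h2] := IH pos.+1 i.+1 j.+1 ltac:(lia) ltac:(lia); split; lia.
have [h1 h2] := IH pos.+1 i.+1 j ltac:(lia) ltac:(lia); split; lia.
Qed.

Lemma ml_first fuel b pos i j n : (i < j < n)%N -> (n - i < fuel)%N ->
  (i < (merge_loop fuel b pos i j n).2)%N.
Proof.
case: fuel => [|f] hij hf; first by rewrite ltn0 in hf.
rewrite /=; case: (b pos) => /=.
  have -> : (j == n) = false by apply/eqP; lia.
  have [h1 h2] := @ml_inv f b pos.+1 i.+1 j.+1 n ltac:(lia) ltac:(lia); lia.
have -> : (i == j) = false by apply/eqP; lia.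
have [h1 h2] := @ml_inv f b pos.+1 i.+1 j n ltac:(lia) ltac:(lia); lia.
Qed.

Definition vd (n i : nat) : rat := ((n - i)%N%:R) ^+ 2 + (n - i)%N%:R.

Lemma avg2 (A B X Y R : rat) : A <= X -> B <= Y -> X + Y <= 2 * R -> (A + B) / 2 <= R.
Proof. lra. Qed.

Lemma supm fuel i j n : (i <= j <= n)%N -> (n - i < fuel)%N ->
  Avg fuel (fun b => vd n (merge_loop fuel b 0 i j n).2)
  <= (2 * j%:R - i%:R - n%:R) ^+ 2 + (n - i)%N%:R.
Proof.
elim: fuel i j => [|f IH] i j hij hf; first by rewrite ltn0 in hf.
have Hf : Avg f (fun s => vd n (merge_loop f.+1 (cons false s) 0 i j n).2) <=
   if i == j then vd n i else (2 * j%:R - i.+1%:R - n%:R) ^+ 2 + (n - i.+1)%N%:R.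
  rewrite /=; case: eqP => [_|hij']; first by rewrite Avg_cst.
  under Avg_ext => s do rewrite ml_cons /=.
  apply: IH; lia.
have Ht : Avg f (fun s => vd n (merge_loop f.+1 (cons true s) 0 i j n).2) <=
   if j == n then vd n i else (2 * j.+1%:R - i.+1%:R - n%:R) ^+ 2 + (n - i.+1)%N%:R.
  rewrite /=; case: eqP => [_|hjn]; first by rewrite Avg_cst.
  under Avg_ext => s do rewrite ml_cons /=.
  apply: IH; lia.
change ((Avg f (fun s => vd n (merge_loop f.+1 (cons false s) 0 i j n).2)
   + Avg f (fun s => vd n (merge_loop f.+1 (cons true s) 0 i j n).2)) / 2
   <= (2 * j%:R - i%:R - n%:R) ^+ 2 + (n - i)%N%:R).
apply: (avg2 Hf Ht).
have hin : (i <= n)%N by lia.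
rewrite /vd natrB //.
have hIN : i%:R <= n%:R :> rat by rewrite ler_nat.
have hJN : j%:R <= n%:R :> rat by rewrite ler_nat; lia.
have hIJ : i%:R <= j%:R :> rat by rewrite ler_nat; lia.
case: eqP => [eij|nij]; case: eqP => [ejn|njn].
- subst; nra.
- subst; rewrite natrB ?natrS; last by lia.
  nra.
- subst; rewrite natrB ?natrS; last by lia.
  nra.
- rewrite natrB ?natrS; last by lia.
  nra.
Qed.

Lemma clog2_ge1 u : (1 < u)%N -> (1 <= clog2 u)%N.
Proof. by move=> h; rewrite /clog2 up_log_gt0 h. Qed.

Lemma clog2_le P u : (u <= 2 ^ P.+1)%N -> (clog2 u <= P.+1)%N.
Proof. by move=> h; rewrite /clog2 up_log_min. Qed.

Lemma gbounds s P b :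
  (2 * 2 ^ P + 1 <= (mc b (s, 2 ^ P, 2 ^ P)%N).2 <=
   2 * 2 ^ P + 1 + P * (s + 2 ^ P + 2 ^ P - (mlx b (s, 2 ^ P, 2 ^ P)%N).2))%N.
Proof.
set x := (s, 2 ^ P, 2 ^ P)%N; rewrite mc_eq /=.
have hp : (0 < 2 ^ P)%N by rewrite expn_gt0.
have hf : (s + 2 ^ P + 2 ^ P - s < fuelx x)%N by rewrite /fuelx /=; lia.
have ha : (s <= s + 2 ^ P <= s + 2 ^ P + 2 ^ P)%N by apply/andP; split; lia.
have hb : (s < s + 2 ^ P < s + 2 ^ P + 2 ^ P)%N by apply/andP; split; lia.
have [/andP[h1 h2] h3] := @ml_inv (fuelx x) b 0 s (s + 2 ^ P) (s + 2 ^ P + 2 ^ P) ha hf.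
have h4 := @ml_first (fuelx x) b 0 s (s + 2 ^ P) (s + 2 ^ P + 2 ^ P) hb hf.
rewrite -/(mlx b x) in h1 h2 h3 h4.
rewrite /gx /= h3.
set r := (mlx b x).2 in h1 h2 h3 h4 *.
set n := (s + 2 ^ P + 2 ^ P)%N.
have L1 : (\sum_(r <= t < n) 1 <= \sum_(r <= t < n) clog2 (t - s + 1))%N.
  rewrite !big_nat; apply: leq_sum => t /andP[ht1 ht2]; apply: clog2_ge1; lia.
have L2 : (\sum_(r <= t < n) clog2 (t - s + 1) <= \sum_(r <= t < n) P.+1)%N.
  rewrite !big_nat; apply: leq_sum => t /andP[ht1 ht2]; apply: clog2_le.
  rewrite expnS; lia.
rewrite !sum_nat_const_nat in L1 L2.
have e2 : (2 ^ P.+1 = 2 * 2 ^ P)%N by rewrite expnS.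
apply/andP; split; [lia | nia].
Qed.

Lemma avg_lo s P :
  (2 * 2 ^ P + 1)%N%:R <= Avg (fuelx (s, 2 ^ P, 2 ^ P)%N) (fun b => ((mc b (s, 2 ^ P, 2 ^ P)%N).2)%:R).
Proof.
rewrite -(Avg_cst (fuelx (s, 2 ^ P, 2 ^ P)%N) (2 * 2 ^ P + 1)%N%:R).
apply: Avg_le => b; rewrite ler_nat.
by case/andP: (gbounds s P b).
Qed.

Lemma avg_hi s P (t : rat) : 0 < t ->
  Avg (fuelx (s, 2 ^ P, 2 ^ P)%N) (fun b => ((mc b (s, 2 ^ P, 2 ^ P)%N).2)%:R)
  <= (2 * 2 ^ P + 1)%N%:R + P%:R / t * ((2 * 2 ^ P)%N%:R + t ^+ 2).
Proof.
move=> ht.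
set x := (s, 2 ^ P, 2 ^ P)%N.
set n := (s + 2 ^ P + 2 ^ P)%N.
apply: (le_trans (y := Avg (fuelx x) (fun b => (2 * 2 ^ P + 1)%N%:R
           + P%:R / t * (vd n (mlx b x).2 + t ^+ 2)))).
  apply: Avg_le => b.
  have /andP[_ hb] := gbounds s P b.
  have hr : ((mlx b x).2 <= n)%N.
    have hf : (n - s < fuelx x)%N by rewrite /fuelx /n /=; lia.
    have ha : (s <= s + 2 ^ P <= n)%N by apply/andP; split; rewrite /n; lia.
    by have [/andP[_ ->] _] := @ml_inv (fuelx x) b 0 s (s + 2 ^ P) n ha hf.
  rewrite -/x -/n in hb.
  apply: (le_trans (y := (2 * 2 ^ P + 1)%N%:R + P%:R * (n - (mlx b x).2)%N%:R)).
    by rewrite -natrM -natrD ler_nat.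
  rewrite lerD2l /vd.
  set D := (n - (mlx b x).2)%N%:R.
  have hD : 0 <= D by rewrite ler0n.
  have hP : 0 <= P%:R :> rat by rewrite ler0n.
  rewrite -mulrA; apply: ler_wpM2l => //; rewrite mulrC.
  rewrite ler_pdivlMr //.
  nra.
rewrite Avg_add Avg_cst Avg_scale Avg_add Avg_cst lerD2l.
apply: ler_wpM2l; first by rewrite divr_ge0 ?ler0n // ltW.
rewrite lerD2r.
have := @supm (fuelx x) s (s + 2 ^ P) n ltac:(apply/andP; split; rewrite /n; lia)
   ltac:(rewrite /fuelx /n /=; lia).
rewrite /mlx /= -/n.
have -> : (2 * (s + 2 ^ P)%N%:R - s%:R - n%:R) = 0 :> rat.
  rewrite /n !natrD; ring.
by rewrite expr0n /= add0r -/(fuelx x) (_ : (n - s = 2 * 2 ^ P)%N) //; rewrite /n; lia.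
Qed.

Lemma geo_eq (x : rat) N : x != 1 -> \sum_(0 <= p < N) x ^+ p = (1 - x ^+ N) / (1 - x).
Proof.
move=> hx; have hx' : 1 - x != 0 by rewrite subr_eq0 eq_sym.
elim: N => [|N IH]; first by rewrite big_geq // expr0 subrr mul0r.
rewrite big_nat_recr //= IH exprS; by field.
Qed.

Lemma geo_le (x : rat) N : 0 <= x < 1 -> \sum_(0 <= p < N) x ^+ p <= 1 / (1 - x).
Proof.
case/andP=> h0 h1; rewrite geo_eq; last by rewrite lt_eqF.
rewrite ler_pM2r ?invr_gt0 ?subr_gt0 //.
by rewrite gerBl exprn_ge0.
Qed.

Lemma ageo_eq (x : rat) N : x != 1 ->
  \sum_(0 <= p < N) p%:R * x ^+ p + (N%:R / (1 - x) + x / (1 - x) ^+ 2) * x ^+ N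
  = x / (1 - x) ^+ 2.
Proof.
move=> hx; have hx' : 1 - x != 0 by rewrite subr_eq0 eq_sym.
elim: N => [|N IH]; first by rewrite big_geq // expr0 mulr1 mul0r !add0r.
rewrite big_nat_recr //= -addrA -[RHS]IH; congr (_ + _); rewrite [x ^+ N.+1]exprS -natr1; by field.
Qed.

Lemma ageo_le (x : rat) N : 0 <= x < 1 ->
  \sum_(0 <= p < N) p%:R * x ^+ p <= x / (1 - x) ^+ 2.
Proof.
case/andP=> h0 h1; rewrite -(ageo_eq N); last by rewrite lt_eqF.
rewrite lerDl; apply: mulr_ge0; last exact: exprn_ge0.
have h2 : 0 < 1 - x by rewrite subr_gt0.
apply: addr_ge0; apply: divr_ge0 => //; [exact: ltW| exact: exprn_ge0 (ltW h2)].
Qed.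

Lemma exp_decomp m : expected_cost m =
  \sum_(x <- merge_schedule m) Avg (fuelx x) (fun b => ((mc b x).2)%:R).
Proof.
rewrite /expected_cost.
have := ffun_avg (stream_len m) (fun b => (mergeshuffle_cost m b)%:R); rewrite /= => ->.
rewrite -total_avg; apply: Avg_ext => b; by rewrite mscost_run.
Qed.

Lemma iota_idx K : iota 0 K = index_iota 0 K.
Proof. by rewrite /index_iota subn0. Qed.

Lemma sum_iota_const (c : rat) K : \sum_(b <- iota 0 K) c = c *+ K.
Proof. by rewrite iota_idx sumr_const_nat subn0. Qed.

Definition tp (p : nat) : rat := (3/4) ^+ p * 2 ^+ p.

Lemma term_eq m p : (p < m)%N ->
  ((2 * 2 ^ p + 1)%N%:R + p%:R / tp p * ((2 * 2 ^ p)%N%:R + tp p ^+ 2)) *+ 2 ^ (m - p.+1)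
  = (2 ^ m)%N%:R * (1 + (1/2) ^+ p / 2 + p%:R * (2/3) ^+ p + p%:R * (3/4) ^+ p / 2).
Proof.
move=> hp.
have hm : (2 ^ m = 2 ^ (m - p.+1) * (2 * 2 ^ p))%N by rewrite -expnS -expnD subnK.
rewrite hm -mulr_natr !natrM natrD !natrM natrX /tp.
have e1 : (1/2 : rat) ^+ p = (2 ^+ p)^-1 by rewrite -exprVn div1r.
have e2 : (2/3 : rat) ^+ p = ((3/4) ^+ p * 2 ^+ p)^-1.
  rewrite -exprMn -exprVn; congr (_ ^+ p); by field.
rewrite e1 e2.
have hX : (2 : rat) ^+ p != 0 by rewrite expf_neq0.
have hv : (3/4 : rat) ^+ p != 0 by rewrite expf_neq0.
field; by rewrite hX hv.
Qed.

Lemma lowN m : (1 <= m)%N ->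
  (m * 2 ^ m + 2 ^ m.-1 <= \sum_(p <- iota 0 m) (2 * 2 ^ p + 1) * 2 ^ (m - p.+1))%N.
Proof.
case: m => [//|m] _.
rewrite iota_idx big_nat_recl // subn1 expn0 [m.+1.-1]/=.
have H : (\sum_(0 <= i < m) 2 ^ m.+1 <=
          \sum_(0 <= i < m) (2 * 2 ^ i.+1 + 1) * 2 ^ (m.+1 - i.+2))%N.
  rewrite !big_nat; apply: leq_sum => i /andP[_ hi].
  have e : (2 * 2 ^ i.+1 * 2 ^ (m.+1 - i.+2) = 2 ^ m.+1)%N.
    by rewrite -expnS -expnD subnKC.
  rewrite -{1}e; lia.
rewrite sum_nat_const_nat subn0 in H.
rewrite expnS in H *; lia.
Qed.

Lemma fsum m : \sum_(0 <= p < m) (1 + (1/2 : rat) ^+ p / 2 + p%:R * (2/3) ^+ p + p%:R * (3/4) ^+ p / 2)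
  <= m%:R + 13.
Proof.
rewrite !big_split /= sumr_const_nat subn0 -!mulr_suml.
have h1 : \sum_(0 <= p < m) (1/2 : rat) ^+ p <= 1 / (1 - 1/2) by apply: geo_le; apply/andP; split; lra.
have h2 : \sum_(0 <= p < m) p%:R * (2/3 : rat) ^+ p <= (2/3) / (1 - 2/3) ^+ 2.
  by apply: ageo_le; apply/andP; split; lra.
have h3 : \sum_(0 <= p < m) p%:R * (3/4 : rat) ^+ p <= (3/4) / (1 - 3/4) ^+ 2.
  by apply: ageo_le; apply/andP; split; lra.
have c1 : 1 / (1 - 1/2) = 2 :> rat by field.
have c2 : (2/3) / (1 - 2/3) ^+ 2 = 6 :> rat by field.
have c3 : (3/4) / (1 - 3/4) ^+ 2 = 12 :> rat by field.
rewrite c1 in h1; rewrite c2 in h2; rewrite c3 in h3.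
clear c1 c2 c3; move: h1 h2 h3.
move: (\sum_(0 <= p < m) (1/2 : rat) ^+ p) (\sum_(0 <= p < m) p%:R * (2/3 : rat) ^+ p)
  (\sum_(0 <= p < m) p%:R * (3/4 : rat) ^+ p) => A B C hA hB hC.
lra.
Qed.

Theorem mainTheorem3 :
  exists (c1 c2 : rat) (M : nat), 0 < c1 /\ 0 < c2 /\
    forall m : nat, (1 <= m)%N -> (M <= m)%N ->
      c1 * (2 ^ m)%:R <= expected_cost m - (m * 2 ^ m)%:R <= c2 * (2 ^ m)%:R.
Proof.
exists (1/2), 13, 0%N; split; first lra; split; first lra.
move=> m hm _.
rewrite exp_decomp /merge_schedule big_allpairs_dep /=.
apply/andP; split.
- have Hlo : ((m * 2 ^ m + 2 ^ m.-1)%N)%:R <=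
    \sum_(p <- iota 0 m) \sum_(b <- iota 0 (2 ^ (m - p.+1)))
       Avg (fuelx (b * 2 ^ p.+1, 2 ^ p, 2 ^ p)%N)
           (fun b0 => ((mc b0 (b * 2 ^ p.+1, 2 ^ p, 2 ^ p)%N).2)%:R).
    apply: (@le_trans _ _ ((\sum_(p <- iota 0 m) ((2 * 2 ^ p + 1) * 2 ^ (m - p.+1))%N)%:R)).
      by rewrite ler_nat; exact: (lowN hm).
    rewrite natr_sum; apply: ler_sum => p _.
    rewrite natrM mulr_natr -sum_iota_const; apply: ler_sum => b _.
    exact: avg_lo.
  move: Hlo; move: (\sum_(p <- iota 0 m) _) => S.
  have e : (2 ^ m = 2 ^ m.-1 * 2)%N by rewrite -expnSr prednK.
  rewrite e !natrD !natrM; lra.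
- set M := (2 ^ m)%:R : rat.
  have Hhi : \sum_(p <- iota 0 m) \sum_(b <- iota 0 (2 ^ (m - p.+1)))
       Avg (fuelx (b * 2 ^ p.+1, 2 ^ p, 2 ^ p)%N)
           (fun b0 => ((mc b0 (b * 2 ^ p.+1, 2 ^ p, 2 ^ p)%N).2)%:R)
     <= M * (m%:R + 13).
    apply: le_trans; first (apply: ler_sum => p _; apply: ler_sum => b _;
      exact: (avg_hi (b * 2 ^ p.+1) p (t := tp p)
        ltac:(by rewrite /tp mulr_gt0 // exprn_gt0))).
    rewrite /=.
    under eq_bigr => p _ do rewrite sum_iota_const.
    rewrite iota_idx big_nat.
    rewrite (eq_bigr (fun p => M * (1 + (1/2) ^+ p / 2 + p%:R * (2/3) ^+ p + p%:R * (3/4) ^+ p / 2)));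
      last by move=> p /andP[_ hp]; rewrite term_eq.
    rewrite -big_nat -mulr_sumr; apply: ler_wpM2l; first by rewrite /M ler0n.
    exact: fsum.
  move: Hhi; move: (\sum_(p <- iota 0 m) _) => S.
  rewrite natrM -/M => H.
  rewrite mulrDr in H; lra.
Qed.
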